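(* Let $G=(N,A)$ be a directed graph with arc capacities $u_{ij}\ge0$, and suppose there is a single commodity ($K=\{1\}$) with origin $O(1)$ and destination $D(1)$. Fix $\bar y\in\{0,1\}^{|A|}$ and a scenario $\bar s$ with demand $d^1(\omega_{\bar s})\ge0$, and assume $\bar y$ is not feasible for $\bar s$. Let $\mathcal C$ be the set of all $(O(1),D(1))$ cuts in $G$ and let $$C^*_{\mathrm{SNC}}\in\arg\max_{C\in\mathcal C}\frac{d^1(\omega_{\bar s})-\sum_{(i,j)\in C}u_{ij}\bar y_{ij}}{|C|+1}.$$ Then there is an optimal solution $(\mu^*,\pi^*,\lambda^* )$ of the SNC dual program at $(\bar y,\omega_{\bar s})$ whose derived feasibility cut $d^1(\omega_{\bar s})\lambda^{1*}-\sum_{(i,j)\in A}u_{ij}\pi^*_{ij}y_{ij}\le0$ (in variables $y$) is equivalent to $$\sum_{(i,j)\in C^*_{\mathrm{SNC}}}u_{ij}y_{ij}\ge d^1(\omega_{\bar s}).$$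
   Context: Admissible arcs for commodity 1: $A^1=\{(i,j)\in A: j\neq O(1),\ i\neq D(1)\}$. Feasibility: $\bar y$ is feasible for scenario $\bar s$ if there exist flows $x^1_{ij}\ge0$, $(i,j)\in A^1$, with flow conservation at every $i\notin\{O(1),D(1)\}$, capacities $x^1_{ij}\le u_{ij}\bar y_{ij}$, and inflow into $D(1)$ at least $d^1(\omega_{\bar s})$. An $(O(1),D(1))$ cut is an arc set $\{(i,j)\in A: i\in W, j\notin W\}$ for some $W\subseteq N$ with $O(1)\in W$, $D(1)\notin W$. The SNC dual program at $(y,\omega)$: maximize $d^1(\omega)\lambda^1-\sum_{(i,j)\in A}u_{ij}y_{ij}\pi_{ij}$ over $\mu^1_i$ free ($i\in N$), $\pi_{ij}\ge0$, $\lambda^1\ge0$, subject to $\mu^1_{O(1)}=0$, $\mu^1_{D(1)}=\lambda^1$, $\pi_{ij}\ge\mu^1_j-\mu^1_i$ for all $(i,j)\in A^1$, and $\sum_{(i,j)\in A}\pi_{ij}+\lambda^1\le1$. ''Equivalent'' means the two inequalities define the same set of $y$ (they coincide up to a positive scalar multiple). *)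

(* Defs.v *)
From mathcomp Require Import all_boot all_order all_algebra.
Set Implicit Arguments. Unset Strict Implicit. Unset Printing Implicit Defensive.
Import Order.TTheory GRing.Theory Num.Theory.
Local Open Scope ring_scope.

Section SNC.
Variables (R : realFieldType) (N : finType).
Variable A : {set N * N}.
Variables (u : N * N -> R) (O D : N).

Definition adm (a : N * N) : bool := [&& a \in A, a.2 != O & a.1 != D].

Definition feasible (ybar : N * N -> bool) (d : R) : Prop :=
  exists x : N * N -> R,
    [/\ (forall a, adm a -> 0 <= x a),
        (forall i, i != O -> i != D ->
           \sum_(a in A | adm a && (a.2 == i)) x a
           = \sum_(a in A | adm a && (a.1 == i)) x a),
        (forall a, adm a -> x a <= u a * (ybar a)%:R) &
        d <= \sum_(a in A | adm a && (a.2 == D)) x a].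

Definition cut_of (W : {set N}) : {set N * N} :=
  [set a in A | (a.1 \in W) && (a.2 \notin W)].

Definition is_OD_cut (C : {set N * N}) : Prop :=
  exists W : {set N}, [/\ O \in W, D \notin W & C = cut_of W].

Definition cut_ratio (ybar : N * N -> bool) (d : R) (C : {set N * N}) : R :=
  (d - \sum_(a in C) u a * (ybar a)%:R) / (#|C|%:R + 1).

Definition is_argmax_cut (ybar : N * N -> bool) (d : R) (C : {set N * N}) : Prop :=
  is_OD_cut C /\
  forall C', is_OD_cut C' -> cut_ratio ybar d C' <= cut_ratio ybar d C.

Definition dual_feasible (mu : N -> R) (pi : N * N -> R) (lam : R) : Prop :=
  [/\ mu O = 0 /\ mu D = lam, 0 <= lam,
      (forall a, a \in A -> 0 <= pi a),
      (forall a, adm a -> mu a.2 - mu a.1 <= pi a) &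
      \sum_(a in A) pi a + lam <= 1].

Definition dual_obj (y : N * N -> R) (d : R) (pi : N * N -> R) (lam : R) : R :=
  d * lam - \sum_(a in A) u a * y a * pi a.

Definition dual_optimal (y : N * N -> R) (d : R)
  (mu : N -> R) (pi : N * N -> R) (lam : R) : Prop :=
  dual_feasible mu pi lam /\
  forall mu' pi' lam', dual_feasible mu' pi' lam' ->
    dual_obj y d pi' lam' <= dual_obj y d pi lam.

End SNC.

(* Main.v *)
Require Import Defs.
From mathcomp Require Import all_boot all_order all_algebra.
From mathcomp Require Import ring lra zify.
Import Order.TTheory GRing.Theory Num.Theory.
Local Open Scope ring_scope.

Module FlowM.
Set Implicit Arguments. Unset Strict Implicit. Unset Printing Implicit Defensive.

Section Flow.
Variables (R : realFieldType) (N E : finType) (s t : N).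
Hypothesis st : s != t.

Definition inflow (h : E -> N) (f : E -> R) v := \sum_(x | h x == v) f x.
Definition fvalue (tl hd : E -> N) f := inflow hd f t - inflow tl f t.
Definition cap (tl hd : E -> N) (c : E -> R) (W : {set N}) :=
  \sum_(x | (tl x \in W) && (hd x \notin W)) c x.
Definition isflow (tl hd : E -> N) (c f : E -> R) :=
  (forall x, 0 <= f x <= c x) /\
  (forall v, v != s -> v != t -> inflow hd f v = inflow tl f v).
Definition upd (f : E -> R) e a := fun x => if x == e then a else f x.

Lemma sum_upd (P : pred E) f e a :
  \sum_(x | P x) upd f e a x = \sum_(x | P x) f x + (if P e then a - f e else 0).
Proof.
case: (boolP (P e)) => Pe.
  rewrite (bigD1 e) //= [in RHS](bigD1 e) //= /upd eqxx.
  rewrite (eq_bigr (fun x => f x)); last by move=> x /andP[_ /negbTE ->].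
  lra.
rewrite addr0; apply: eq_bigr => x Px; rewrite /upd.
by case: eqP => // xe; rewrite -xe Px in Pe.
Qed.

Lemma sum_by_node (h : E -> N) (f : E -> R) (mu : N -> R) :
  \sum_x f x * mu (h x) = \sum_v mu v * inflow h f v.
Proof.
rewrite (partition_big h xpredT) //=; apply: eq_bigr => v _.
rewrite /inflow mulr_sumr; apply: eq_bigr => x /eqP ->; by rewrite mulrC.
Qed.

Lemma potential tl hd f (mu : N -> R) :
  (forall v, v != s -> v != t -> inflow hd f v = inflow tl f v) -> mu s = 0 ->
  \sum_x f x * (mu (hd x) - mu (tl x)) = mu t * fvalue tl hd f.
Proof.
move=> cons mus.
rewrite (eq_bigr (fun x => f x * mu (hd x) - f x * mu (tl x))); last by move=> x _; rewrite mulrBr.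
rewrite sumrB !sum_by_node -sumrB (bigD1 t) //= (bigD1 s) ?st //=.
rewrite big1 ?mus; first by rewrite /fvalue; lra.
move=> v /andP[vt vs]; rewrite cons //; lra.
Qed.


Lemma saturate tl hd c f (W : {set N}) :
  isflow tl hd c f -> s \in W -> t \notin W -> cap tl hd c W <= fvalue tl hd f ->
  (forall x, tl x \in W -> hd x \notin W -> f x = c x) /\
  (forall x, tl x \notin W -> hd x \in W -> f x = 0).
Proof.
move=> [fb cons] sW tW hle.
have pot := @potential tl hd f (fun v => (v \notin W)%:R) cons.
rewrite /= sW tW /= mul1r in pot; have {}pot := pot erefl.
pose g x := (if (tl x \in W) && (hd x \notin W) then c x - f x else 0) +
            (if (tl x \notin W) && (hd x \in W) then f x else 0).
have g0 x : 0 <= g x.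
  rewrite /g; have /andP[h1 h2] := fb x.
  case: (tl x \in W); case: (hd x \in W) => /=; lra.
have gs : \sum_x g x = cap tl hd c W - fvalue tl hd f.
  rewrite -pot /cap [in RHS]big_mkcond /= -sumrB; apply: eq_bigr => x _.
  rewrite /g; case: (tl x \in W); case: (hd x \in W) => /=; lra.
have gz : \sum_x g x = 0 by apply/eqP; rewrite eq_le; apply/andP; split;
  [rewrite gs; lra | exact: sumr_ge0].
have := psumr_eq0P (fun x _ => g0 x) gz => gx.
split=> x h1 h2; have := gx x erefl; rewrite /g h1 h2 /=.
  by rewrite ?(negbTE h2) /=; lra.
by rewrite ?(negbTE h1) ?andbF /=; lra.
Qed.

Definition supp (tl hd : E -> N) (c : E -> R) := [set x | (0 < c x) && (tl x != hd x)].
Definition act (tl hd : E -> N) (c : E -> R) := [set v | (v != s) && (v != t) &&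
  [exists x, (x \in supp tl hd c) && ((tl x == v) || (hd x == v))]].
Definition meas (tl hd : E -> N) (c : E -> R) := (#|supp tl hd c| + #|act tl hd c|)%N.

Lemma meas_lt_upd tl hd (c c' : E -> R) e :
  (forall x, 0 < c' x -> 0 < c x) -> e \in supp tl hd c -> ~~ (0 < c' e) ->
  (meas tl hd c' < meas tl hd c)%N.
Proof.
move=> pos es ce.
have s1 : supp tl hd c' \proper supp tl hd c.
  apply/properP; split.
    by apply/subsetP => x; rewrite !inE => /andP[/pos -> ->].
  by exists e => //; rewrite inE (negbTE ce).
have s2 : act tl hd c' \subset act tl hd c.
  apply/subsetP => v; rewrite !inE => /andP[-> /existsP[x /andP[xs xv]]].
  apply/existsP; exists x; rewrite xv andbT.
  by move: xs; rewrite !inE => /andP[/pos -> ->].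
have := proper_card s1; have := subset_leq_card s2; rewrite /meas.
move=> h1 h2; lia.
Qed.

Lemma meas_lt_map (phi : N -> N) tl hd (c c' : E -> R) v0 :
  (forall x, 0 < c' x -> 0 < c x) ->
  (forall w, phi w != s -> phi w != t -> phi w = w) ->
  v0 \in act tl hd c -> (forall w, phi w != v0) ->
  (meas (phi \o tl) (phi \o hd) c' < meas tl hd c)%N.
Proof.
move=> pos ph v0a nv0.
have s1 : supp (phi \o tl) (phi \o hd) c' \subset supp tl hd c.
  apply/subsetP => x; rewrite !inE /= => /andP[/pos -> h]; apply/eqP => e.
  by move: h; rewrite e eqxx.
have s2 : act (phi \o tl) (phi \o hd) c' \proper act tl hd c.
  apply/properP; split; last first.
    exists v0 => //; rewrite !inE; apply/negP => /andP[_ /existsP[x /andP[_ h]]].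
    by move: h; rewrite /= !(negbTE (nv0 _)).
  apply/subsetP => v; rewrite !inE => /andP[/andP[vs vt] /existsP[x /andP[xs xv]]].
  rewrite vs vt; apply/existsP; exists x; rewrite (subsetP s1) //=.
  move: xv => /orP[] /eqP /= e.
    by rewrite -e ph ?e // eqxx.
  by rewrite -e ph ?e // eqxx orbT.
have := proper_card s2; have := subset_leq_card s1; rewrite /meas.
move=> h1 h2; lia.
Qed.

Lemma cap_map (phi : N -> N) tl hd c W :
  cap (phi \o tl) (phi \o hd) c W = cap tl hd c [set v | phi v \in W].
Proof. by rewrite /cap; apply: eq_bigl => x; rewrite !inE. Qed.

Lemma inflow_map (phi : N -> N) h (g g' : E -> R) v :
  (forall w, (phi w == v) = (w == v)) -> (forall x, h x == v -> g x = g' x) ->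
  inflow (phi \o h) g' v = inflow h g v.
Proof.
move=> e1 e2; rewrite /inflow; apply: eq_big => x; first by rewrite /= e1.
by rewrite /= e1 => /e2 ->.
Qed.


Lemma cap_upd tl hd c e a W :
  cap tl hd (upd c e a) W =
  cap tl hd c W + (if (tl e \in W) && (hd e \notin W) then a - c e else 0).
Proof. by rewrite /cap sum_upd. Qed.

Lemma inflow_upd h f e a v :
  inflow h (upd f e a) v = inflow h f v + (if h e == v then a - f e else 0).
Proof. by rewrite /inflow sum_upd. Qed.

Lemma upd_pos (c : E -> R) e a x : 0 <= a -> 0 < upd c e a x -> 0 < c x \/ x = e.
Proof. by rewrite /upd; case: eqP => [->|_]; [right | left]. Qed.

Lemma upd_eq (f : E -> R) e a : upd f e a e = a.
Proof. by rewrite /upd eqxx. Qed.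
Lemma upd_ne (f : E -> R) e a x : x != e -> upd f e a x = f x.
Proof. by rewrite /upd => /negbTE ->. Qed.

Definition MF tl hd c d := exists f, isflow tl hd c f /\ d <= fvalue tl hd f.

Lemma mfmc n : forall tl hd c d, meas tl hd c = n -> (forall x, 0 <= c x) ->
  (forall W : {set N}, s \in W -> t \notin W -> d <= cap tl hd c W) ->
  MF tl hd c d.
Proof.
elim/ltn_ind: n => n IH tl hd c d hn c0 hcut.
have IH' tl' hd' c' d' : (meas tl' hd' c' < meas tl hd c)%N -> (forall x, 0 <= c' x) ->
    (forall W : {set N}, s \in W -> t \notin W -> d' <= cap tl' hd' c' W) ->
    MF tl' hd' c' d'.
  by move=> lt; apply: (IH _ _ _ _ _ _ erefl); rewrite -hn.
case: (pickP (fun x => (0 < c x) && (tl x == s) && (hd x == t))) =>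
  [e /andP[/andP[ce /eqP te] /eqP he] | no1].
  have := IH' tl hd (upd c e 0) (d - c e).
  case.
  - apply: (meas_lt_upd (e := e)).
    + by move=> x /upd_pos [] // -> //; rewrite lexx.
    + by rewrite inE ce te he st.
    + by rewrite /upd eqxx ltxx.
  - by move=> x; rewrite /upd; case: eqP.
  - move=> W sW tW; rewrite cap_upd te he sW tW /=; have := hcut W sW tW; lra.
  move=> f' [[fb cons] hv].
  have f'e : f' e = 0.
    by have := fb e; rewrite /upd eqxx => /andP[h1 h2]; apply/eqP; rewrite eq_le h1 h2.
  exists (upd f' e (c e)); split; [split|].
  - move=> x; rewrite /upd; case: eqP => [->|/eqP xe]; first by rewrite lexx ltW.
    by have := fb x; rewrite /upd (negbTE xe).
  - move=> v vs vt; rewrite !inflow_upd te he (eq_sym t) (eq_sym s) (negbTE vs) (negbTE vt).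
    by rewrite cons.
  - rewrite /fvalue !inflow_upd te he eqxx (negbTE st) f'e; move: hv; rewrite /fvalue; lra.
case: (pickP (fun p : E * E => [&& 0 < c p.1, 0 < c p.2, tl p.1 == s & [&& hd p.1 == tl p.2,
     hd p.2 == t, tl p.2 != s & tl p.2 != t]])) =>
  [[e1 e2] /and4P[/= c1 c2 /eqP t1 /and4P[/eqP h1 /eqP h2 v0s v0t]] | no2].
  set v0 := tl e2 in h1 v0s v0t.
  pose dl := if c e1 <= c e2 then c e1 else c e2.
  have dpos : 0 < dl by rewrite /dl; case: ifP.
  have dle1 : dl <= c e1 by rewrite /dl; case: ifP => // /negbT; rewrite -ltNge => /ltW.
  have dle2 : dl <= c e2 by rewrite /dl; case: ifP.
  have e12 : e1 != e2 by apply/eqP => e; move: v0t; rewrite -h1 e h2 eqxx.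
  have e21 : e2 != e1 by rewrite eq_sym.
  pose c' := upd (upd c e1 (c e1 - dl)) e2 (c e2 - dl).
  have c'1 : c' e1 = c e1 - dl by rewrite /c' upd_ne // upd_eq.
  have c'2 : c' e2 = c e2 - dl by rewrite /c' upd_eq.
  have c'x x : x != e1 -> x != e2 -> c' x = c x by move=> h h'; rewrite /c' !upd_ne.
  have := IH' tl hd c' (d - dl).
  case.
  - have pos x : 0 < c' x -> 0 < c x.
      case: (eqVneq x e1) => [->|xe1] //; case: (eqVneq x e2) => [->|xe2] //.
      by rewrite c'x.
    case: (boolP (c e1 <= c e2)) => hle.
      apply: (meas_lt_upd (e := e1)) => //; first by rewrite inE c1 t1 h1 eq_sym v0s.
      by rewrite c'1 /dl hle subrr ltxx.
    apply: (meas_lt_upd (e := e2)) => //; first by rewrite inE c2 h2 v0t.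
    by rewrite c'2 /dl (negbTE hle) subrr ltxx.
  - move=> x; case: (eqVneq x e1) => [->|xe1]; first by rewrite c'1 subr_ge0.
    case: (eqVneq x e2) => [->|xe2]; first by rewrite c'2 subr_ge0.
    by rewrite c'x.
  - move=> W sW tW; rewrite /c' cap_upd cap_upd upd_ne // t1 h1 h2 sW tW /=.
    have := hcut W sW tW; case: (v0 \in W) => /=; lra.
  move=> f' [[fb cons] hv].
  have fb1 := fb e1; have fb2 := fb e2; rewrite c'1 in fb1; rewrite c'2 in fb2.
  exists (upd (upd f' e1 (f' e1 + dl)) e2 (f' e2 + dl)); split; [split|].
  - move=> x; case: (eqVneq x e2) => [->|xe2]; first by rewrite upd_eq; move: fb2 => /andP[]; lra.
    rewrite upd_ne //; case: (eqVneq x e1) => [->|xe1]; first by rewrite upd_eq; move: fb1 => /andP[]; lra.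
    by rewrite upd_ne // -(c'x x).
  - move=> v vs vt; rewrite !inflow_upd !upd_ne // t1 h1 h2 (eq_sym t) (eq_sym s) (negbTE vs) (negbTE vt).
    rewrite cons //; case: (v0 == v); lra.
  - rewrite /fvalue !inflow_upd !upd_ne // t1 h1 h2 eqxx (negbTE st) (negbTE v0t).
    move: hv; rewrite /fvalue; lra.
case: (pickP (fun x => [&& 0 < c x, tl x != hd x, tl x != s & hd x != t])) =>
  [e /and4P[ce ne es et] | no3].
  pose P := fun W : {set N} => [&& s \in W, t \notin W, tl e \in W & hd e \notin W].
  have pos0 x : 0 < upd c e 0 x -> 0 < c x.
    by move/upd_pos => [] // -> //; rewrite lexx.
  case: (boolP [exists W, P W && (cap tl hd c W - c e < d)]) =>
    [/existsP[W0 /andP[PW0 hW0]] | noB]; last first.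
    have := IH' tl hd (upd c e 0) d; case.
    - apply: (meas_lt_upd (e := e)) => //; first by rewrite inE ce ne.
      by rewrite upd_eq ltxx.
    - by move=> x; rewrite /upd; case: eqP.
    - move=> W sW tW; rewrite cap_upd; case: (boolP ((tl e \in W) && (hd e \notin W))) => h /=.
        move/existsPn: noB => /(_ W); rewrite /P sW tW h /= -leNgt; lra.
      by rewrite addr0; apply: hcut.
    move=> f [[fb cons] hv]; exists f; split; [split|] => // x.
    have := fb x; rewrite /upd; case: eqP => [->|_] //.
    move=> /andP[h1 h2]; rewrite h1 /=; exact: le_trans h2 (c0 e).
  case: (arg_minP (cap tl hd c) PW0) => W1 /and4P[sW1 tW1 eW1 hW1] minW1.
  pose ts := d - (cap tl hd c W1 - c e).
  have capW1 : d <= cap tl hd c W1 by apply: hcut.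
  have W10 : cap tl hd c W1 <= cap tl hd c W0 by apply: minW1.
  have ts_pos : 0 < ts by rewrite /ts; lra.
  have ts_le : ts <= c e by rewrite /ts; lra.
  pose c' := upd c e ts.
  have c'0 x : 0 <= c' x by rewrite /c' /upd; case: eqP => _ //; exact: ltW.
  have c'le x : c' x <= c x by rewrite /c' /upd; case: eqP => [->|_] //.
  have pos' x : 0 < c' x -> 0 < c x.
    by move/upd_pos => [] //; [exact: ltW | move=> ->].
  have cut' (W : {set N}) : s \in W -> t \notin W -> d <= cap tl hd c' W.
    move=> sW tW; rewrite cap_upd; case: (boolP ((tl e \in W) && (hd e \notin W))) => h /=.
      have := minW1 W; rewrite /P sW tW h => /(_ erefl) hm; rewrite /ts; lra.
    by rewrite addr0; apply: hcut.
  have tight : cap tl hd c' W1 = d by rewrite cap_upd eW1 hW1 /= /ts; lra.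
  pose phi1 := fun v => if v \in W1 then v else t.
  pose phi2 := fun v => if v \in W1 then s else v.
  have mem1 v : (phi1 v \in W1) = (v \in W1).
    by rewrite /phi1; case: ifP => // _; rewrite (negbTE tW1).
  have mem2 v : (phi2 v \in W1) = (v \in W1).
    by rewrite /phi2; case: ifP => // _.
  have eqphi1 v : v \in W1 -> forall w, (phi1 w == v) = (w == v).
    move=> vW w; rewrite /phi1; case: ifP => // wW.
    have -> : (t == v) = false by apply/eqP => e'; rewrite e' vW in tW1.
    by apply/esym/eqP => e'; rewrite e' vW in wW.
  have eqphi2 v : v \notin W1 -> forall w, (phi2 w == v) = (w == v).
    move=> vW w; rewrite /phi2; case: ifP => // wW.
    have -> : (s == v) = false by apply/eqP => e'; rewrite -e' sW1 in vW.
    by apply/esym/eqP => e'; move: vW; rewrite -e' wW.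
  have cut1 (W : {set N}) : s \in W -> t \notin W -> d <= cap (phi1 \o tl) (phi1 \o hd) c' W.
    move=> sW tW; rewrite cap_map; apply: cut'; rewrite inE /phi1 ?sW1 ?(negbTE tW1) //.
  have cut2 (W : {set N}) : s \in W -> t \notin W -> d <= cap (phi2 \o tl) (phi2 \o hd) c' W.
    move=> sW tW; rewrite cap_map; apply: cut'; rewrite inE /phi2 ?sW1 ?(negbTE tW1) //.
  have eS : e \in supp tl hd c by rewrite inE ce ne.
  have [f1 [[fb1 cons1] hv1]] : MF (phi1 \o tl) (phi1 \o hd) c' d.
    apply: IH' => //; apply: (meas_lt_map (v0 := hd e)) => //.
    - by move=> w; rewrite /phi1; case: ifP => // _; rewrite eqxx.
    - rewrite inE et andbT; apply/andP; split.
        by apply/eqP => e'; move: hW1; rewrite e' sW1.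
      by apply/existsP; exists e; rewrite eS eqxx orbT.
    - move=> w; rewrite /phi1; case: ifP => h; last by rewrite eq_sym.
      by apply/eqP => e'; move: hW1; rewrite -e' h.
  have [f2 [[fb2 cons2] hv2]] : MF (phi2 \o tl) (phi2 \o hd) c' d.
    apply: IH' => //; apply: (meas_lt_map (v0 := tl e)) => //.
    - by move=> w; rewrite /phi2; case: ifP => // _; rewrite eqxx.
    - rewrite inE es /=; apply/andP; split.
        by apply/eqP => e'; move: tW1; rewrite -e' eW1.
      by apply/existsP; exists e; rewrite eS eqxx.
    - move=> w; rewrite /phi2; case: ifP => h; first by rewrite eq_sym.
      by apply/eqP => e'; move: h; rewrite e' eW1.
  have H1 : cap (phi1 \o tl) (phi1 \o hd) c' W1 <= fvalue (phi1 \o tl) (phi1 \o hd) f1.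
    rewrite cap_map (_ : [set v | phi1 v \in W1] = W1) ?tight //.
    by apply/setP => v; rewrite inE mem1.
  have H2 : cap (phi2 \o tl) (phi2 \o hd) c' W1 <= fvalue (phi2 \o tl) (phi2 \o hd) f2.
    rewrite cap_map (_ : [set v | phi2 v \in W1] = W1) ?tight //.
    by apply/setP => v; rewrite inE mem2.
  have [sa1 sb1] := saturate (conj fb1 cons1) sW1 tW1 H1.
  have [sa2 sb2] := saturate (conj fb2 cons2) sW1 tW1 H2.
  pose f x := if (tl x \in W1) && (hd x \in W1) then f1 x else f2 x.
  have ef1 x : (tl x \in W1) || (hd x \in W1) -> f x = f1 x.
    rewrite /f; case: (boolP (tl x \in W1)) => h1; case: (boolP (hd x \in W1)) => h2 //= _.
      by rewrite sa1 /= ?mem1 // sa2 /= ?mem2.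
    by rewrite sb1 /= ?mem1 // sb2 /= ?mem2.
  have ef2 x : (tl x \notin W1) || (hd x \notin W1) -> f x = f2 x.
    rewrite /f; case: (boolP (tl x \in W1)) => h1; case: (boolP (hd x \in W1)) => h2 //=.
  exists f; split; [split|].
  - move=> x; rewrite /f; case: ifP => _; [have := fb1 x | have := fb2 x];
      move=> /andP[h1 h2]; rewrite h1 /=; exact: le_trans h2 (c'le x).
  - move=> v vs vt; case: (boolP (v \in W1)) => vW.
      rewrite -(inflow_map (eqphi1 v vW) (g := f) (g' := f1)); last first.
        by move=> x /eqP hx; apply: ef1; rewrite hx vW orbT.
      rewrite -(inflow_map (eqphi1 v vW) (g := f) (g' := f1)); last first.
        by move=> x /eqP hx; apply: ef1; rewrite hx vW.
      exact: cons1.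
    rewrite -(inflow_map (eqphi2 v vW) (g := f) (g' := f2)); last first.
      by move=> x /eqP hx; apply: ef2; rewrite hx vW orbT.
    rewrite -(inflow_map (eqphi2 v vW) (g := f) (g' := f2)); last first.
      by move=> x /eqP hx; apply: ef2; rewrite hx vW.
    exact: cons2.
  - rewrite /fvalue -(inflow_map (eqphi2 t tW1) (g := f) (g' := f2)); last first.
      by move=> x /eqP hx; apply: ef2; rewrite hx tW1 orbT.
    rewrite -(inflow_map (eqphi2 t tW1) (g := f) (g' := f2)); last first.
      by move=> x /eqP hx; apply: ef2; rewrite hx tW1.
    exact: hv2.
pose S := [set v | [exists x, [&& 0 < c x, tl x == s, hd x == v & tl x != hd x]]].
have tS : t \notin S.
  apply/negP; rewrite inE => /existsP[x /and4P[cx /eqP tx /eqP hx _]].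
  by have := no1 x; rewrite cx tx hx !eqxx.
have := hcut (s |: S) (setU11 s S); rewrite !inE negb_or eq_sym st.
move: tS; rewrite inE => -> /(_ erefl).
have -> : cap tl hd c (s |: S) = 0.
  rewrite /cap big1 // => x /andP[tW hW].
  have := c0 x; rewrite le_eqVlt => /orP[/eqP <- //|cx]; exfalso.
  have nx : tl x != hd x by apply/eqP => e; rewrite e in tW; rewrite tW in hW.
  have := no3 x; rewrite cx nx /= => /negbT; rewrite negb_and !negbK => /orP[/eqP txs | /eqP hxt].
    move: hW; rewrite !inE negb_or => /andP[_ /negP]; apply; apply/existsP; exists x.
    by rewrite cx nx txs !eqxx.
  case: (eqVneq (tl x) s) => [txs|txs].
    by have := no1 x; rewrite cx txs hxt !eqxx.
  move: tW; rewrite !inE (negbTE txs) /= => /existsP[y /and4P[cy /eqP ty /eqP hy _]].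
  have := no2 (y, x); rewrite /= cy cx ty hy hxt !eqxx txs /=.
  by rewrite -hxt nx.
move=> d0; exists (fun _ => 0); split; [split|].
- by move=> x; rewrite lexx c0.
- by move=> v _ _; rewrite /inflow !big1.
- by rewrite /fvalue /inflow !big1 // subrr.
Qed.

End Flow.

Lemma cap_adm (R : realFieldType) (N : finType) (A : {set N * N}) (O D : N)
  (g : N * N -> R) (W : {set N}) : O \in W -> D \notin W ->
  cap fst snd (fun x => if adm A O D x then g x else 0) W = \sum_(x in cut_of A W) g x.
Proof.
move=> OW DW; rewrite /cap /cut_of big_mkcond [RHS]big_mkcond /=; apply: eq_bigr => x _.
rewrite inE; case: (boolP (x.1 \in W)) => h1; case: (boolP (x.2 \in W)) => h2 /=; rewrite ?andbF //.
rewrite /adm andbT.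
have -> : x.2 != O by apply/eqP => e; move: h2; rewrite e OW.
have -> : x.1 != D by apply/eqP => e; move: h1; rewrite e (negbTE DW).
by rewrite !andbT.
Qed.

Lemma sum_adm (R : realFieldType) (N : finType) (A : {set N * N}) (O D : N)
  (f : N * N -> R) (P : pred (N * N)) : (forall a, ~~ adm A O D a -> f a = 0) ->
  \sum_(a in A | adm A O D a && P a) f a = \sum_(a | P a) f a.
Proof.
move=> h; rewrite big_mkcond [RHS]big_mkcond /=; apply: eq_bigr => a _.
case: (boolP (adm A O D a)) => ha /=.
  by move: (ha); rewrite /adm => /and3P[-> _ _].
by rewrite andbF h //; case: (P a).
Qed.

Lemma flow_exists (R : realFieldType) (N : finType) (A : {set N * N}) (O D : N)
  (g : N * N -> R) (d : R) : O != D ->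
  (forall a, adm A O D a -> 0 <= g a) ->
  (forall W : {set N}, O \in W -> D \notin W -> d <= \sum_(x in cut_of A W) g x) ->
  exists f : N * N -> R,
    [/\ forall a, 0 <= f a <= (if adm A O D a then g a else 0),
        forall v, v != O -> v != D -> inflow snd f v = inflow fst f v,
        forall a, ~~ adm A O D a -> f a = 0 &
        d <= fvalue D fst snd f].
Proof.
move=> OD g0 hcut.
have := @mfmc R N (N * N)%type O D OD _ fst snd (fun x => if adm A O D x then g x else 0) d erefl.
case.
- by move=> x; case: (boolP (adm A O D x)) => h //; apply: g0.
- by move=> W OW DW; rewrite cap_adm //; apply: hcut.
move=> f [[fb cons] hv]; exists f; split => // a ha.
by have := fb a; rewrite (negbTE ha) => /andP[h1 h2]; apply/eqP; rewrite eq_le h1 h2.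
Qed.

End FlowM.
Import FlowM.

Lemma sumC (R : realFieldType) (N : finType) (A C : {set N * N}) (F : N * N -> R) :
  C \subset A -> \sum_(a in A) (if a \in C then F a else 0) = \sum_(a in C) F a.
Proof.
move=> CA; rewrite -big_mkcondr; apply: eq_bigl => a.
case: (boolP (a \in C)) => h; last by rewrite andbF.
by rewrite (subsetP CA a h).
Qed.

Theorem theorem3 (R : realFieldType) (N : finType) (A : {set N * N})
  (u : N * N -> R) (O D : N) (ybar : N * N -> bool) (d : R) (Cstar : {set N * N}) :
  (forall a, a \in A -> 0 <= u a) ->
  0 <= d ->
  ~ feasible A u O D ybar d ->
  is_argmax_cut A u O D ybar d Cstar ->
  exists (mu : N -> R) (pi : N * N -> R) (lam : R),
    dual_optimal A u O D (fun a => (ybar a)%:R) d mu pi lam /\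
    (* the derived cut and the cut-set inequality coincide up to a positive multiple *)
    (exists c : R, 0 < c /\ d * lam = c * d /\
       forall a, a \in A -> u a * pi a = c * (u a * (a \in Cstar)%:R)) /\
    (* hence they define the same set of y *)
    (forall y : N * N -> R,
       (d * lam - \sum_(a in A) u a * pi a * y a <= 0) <->
       (d <= \sum_(a in Cstar) u a * y a)).
Proof.
move=> hu hd0 hinf [[Ws [OW DW eC]] hmax].
have OD : O != D by apply/eqP => e; move: DW; rewrite -e OW.
have CA : Cstar \subset A by rewrite eC; apply/subsetP => a; rewrite inE => /andP[].
have admA a : adm A O D a -> a \in A by rewrite /adm => /and3P[].
have yb0 a : 0 <= ((ybar a)%:R : R) by rewrite ler0n.
have [W0 [OW0 DW0 hW0]] : exists W0 : {set N}, [/\ O \in W0, D \notin W0 &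
    \sum_(a in cut_of A W0) u a * (ybar a)%:R < d].
  case: (boolP [exists W : {set N}, [&& O \in W, D \notin W &
      \sum_(a in cut_of A W) u a * (ybar a)%:R < d]]).
    by move=> /existsP[W /and3P[h1 h2 h3]]; exists W.
  move=> /existsPn hall; exfalso; apply: hinf.
  have := @flow_exists R N A O D (fun a => u a * (ybar a)%:R) d OD.
  case.
  - by move=> a /admA aA; apply: mulr_ge0 => //; apply: hu.
  - move=> W OW' DW'; have := hall W; rewrite OW' DW' /= -leNgt; done.
  move=> f [fb cons f0 hv]; exists f; split.
  - by move=> a ha; have := fb a; rewrite ha => /andP[].
  - move=> i iO iD; rewrite !sum_adm //; exact: cons.
  - by move=> a ha; have := fb a; rewrite ha => /andP[].
  - rewrite sum_adm //; move: hv; rewrite /fvalue /inflow.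
    rewrite [X in _ - X]big1; first by rewrite subr0.
    move=> a /eqP a1; apply: f0; rewrite /adm a1 eqxx /=; by rewrite !andbF.
set C := Cstar.
pose k : R := #|C|%:R + 1.
have k0 : 0 < k by rewrite /k ltr_wpDl // ler0n.
pose lam := k^-1.
have lam0 : 0 < lam by rewrite invr_gt0.
have klam : k * lam = 1 by rewrite mulfV // gt_eqF.
pose S := \sum_(a in C) u a * (ybar a)%:R.
pose r := (d - S) * lam.
have rE : cut_ratio u ybar d C = r by [].
have r0 : 0 <= r.
  have h := hmax (cut_of A W0) (ex_intro _ W0 (And3 OW0 DW0 erefl)).
  rewrite rE in h; apply: le_trans h; rewrite /cut_ratio; apply: divr_ge0.
    by rewrite subr_ge0 ltW.
  by rewrite ltW // ltr_wpDl // ler0n.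
pose mu := fun v => if v \in Ws then 0 else lam.
pose pi := fun a => if a \in C then lam else 0.
have sumpi : \sum_(a in A) pi a = lam * #|C|%:R.
  by rewrite /pi (@sumC _ _ _ _ (fun _ => lam) CA) sumr_const mulr_natr.
have sumupi (F : N * N -> R) : \sum_(a in A) F a * pi a = lam * \sum_(a in C) F a.
  rewrite mulr_sumr -(@sumC _ _ _ _ _ CA); apply: eq_bigr => a _; rewrite /pi.
  by case: (a \in C); rewrite ?mulr0 // mulrC.
have feas : dual_feasible A O D mu pi lam.
  split.
  - by rewrite /mu OW (negbTE DW).
  - exact: ltW.
  - by move=> a _; rewrite /pi; case: (a \in C) => //; apply: ltW.
  - move=> a ha; rewrite /mu /pi.
    case: (boolP (a.1 \in Ws)) => h1; case: (boolP (a.2 \in Ws)) => h2.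
    + by case: (a \in C); lra.
    + have -> : a \in C by rewrite /C eC inE (admA _ ha) h1 h2.
      by rewrite subr0.
    + by case: (a \in C); lra.
    + by case: (a \in C); lra.
  - rewrite sumpi; have : lam * #|C|%:R + lam = k * lam by rewrite /k mulrDl mul1r mulrC.
    by move=> ->; rewrite klam.
have objE : dual_obj A u (fun a => (ybar a)%:R) d pi lam = r.
  rewrite /dual_obj sumupi /r /S; ring.
exists mu, pi, lam; split; [split => // | split].
- move=> mu' pi' lam' [[mu'O mu'D] lam'0 pi'0 pi'adm pi'sum].
  rewrite objE.
  have := @flow_exists R N A O D (fun a => u a * (ybar a)%:R + r) (d - r) OD.
  case.
  - by move=> a /admA aA; apply: addr_ge0 => //; apply: mulr_ge0 => //; apply: hu.
  - move=> W OW' DW'.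
    have h := hmax (cut_of A W) (ex_intro _ W (And3 OW' DW' erefl)).
    rewrite rE /cut_ratio ler_pdivrMr in h; last by rewrite ltr_wpDl // ler0n.
    rewrite big_split /= sumr_const -mulr_natr; lra.
  move=> f [fb cons f0 hv].
  have pot := @potential R N (N * N)%type O D OD fst snd f mu' cons mu'O.
  rewrite mu'D in pot.
  have hle : \sum_x f x * (mu' x.2 - mu' x.1) <=
             \sum_(a in A) (u a * (ybar a)%:R + r) * pi' a.
    rewrite [X in _ <= X]big_mkcond /=; apply: ler_sum => a _.
    case: (boolP (adm A O D a)) => ha.
      rewrite (admA _ ha); have := fb a; rewrite ha => /andP[h1 h2].
      apply: le_trans (ler_wpM2l h1 (pi'adm a ha)) _.
      by apply: ler_wpM2r => //; apply: pi'0; apply: admA.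
    rewrite f0 // mul0r; case: ifP => // aA; apply: mulr_ge0 => //.
    by apply: addr_ge0 => //; apply: mulr_ge0 => //; apply: hu.
    by apply: pi'0.
  rewrite pot in hle.
  have e1 : \sum_(a in A) (u a * (ybar a)%:R + r) * pi' a =
            \sum_(a in A) u a * (ybar a)%:R * pi' a + r * \sum_(a in A) pi' a.
    by rewrite mulr_sumr -big_split; apply: eq_bigr => a _; rewrite mulrDl.
  rewrite e1 in hle.
  have h2 : (d - r) * lam' <= lam' * fvalue D fst snd f.
    by rewrite mulrC; apply: ler_wpM2l.
  have h3 : r * (\sum_(a in A) pi' a + lam') <= r * 1 by apply: ler_wpM2l.
  rewrite /dual_obj; move: h2 h3 hle.
  set P := \sum_(a in A) pi' a; set U := \sum_(a in A) _ * _ * pi' a.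
  set V := lam' * _ => h2 h3 hle.
  rewrite mulrDr mulr1 in h3; rewrite mulrBl in h2; lra.
- exists lam; split => //; split; first by rewrite mulrC.
  move=> a _; rewrite /pi /C; case: (a \in Cstar); rewrite ?mulr1 ?mulr0 //; by rewrite mulrC.
- move=> y.
  have -> : \sum_(a in A) u a * pi a * y a = lam * \sum_(a in C) u a * y a.
    rewrite -sumupi; apply: eq_bigr => a _; by rewrite mulrAC.
  set T := \sum_(a in C) u a * y a.
  rewrite (mulrC d) -mulrBr; split => h.
    rewrite leNgt; apply/negP => hT.
    have : 0 < lam * (d - T) by apply: mulr_gt0 => //; rewrite subr_gt0.
    by rewrite ltNge h.
  by apply: mulr_ge0_le0; [apply: ltW | rewrite subr_le0].
Qed.
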